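(* Let $n \ge 2$ be an integer, let $1 \le \underline{x}_i < \bar{x}_i$ for $i \in \{1,2\}$, and let $\varepsilon \ge 2^{-2^{n-1}}$. Then for every $(x_1,x_2) \in [\underline{x}_1,\bar{x}_1] \times [\underline{x}_2,\bar{x}_2]$ there exists an $\varepsilon$-feasible point $y \in \mathbb{R}^{n+2}$ with $y_n = 0$ for the lower-level problem $$\max_{y \in \mathbb{R}^{n+2}} \; y_1 - y_n\,(x_1 + x_2 - y_{n+1} - y_{n+2})$$ subject to $y_1 + y_n = \tfrac12$, $y_i^2 \le y_{i+1}$ for $i \in \{1,\dots,n-1\}$, $y_i \ge 0$ for $i \in \{1,\dots,n\}$, $y_{n+1} \in [0,x_1]$, $y_{n+2} \in [-x_2,x_2]$.
   Context: For $\varepsilon>0$, a point is called $\varepsilon$-feasible for an optimization problem with constraints $g(y) \le 0$, $h(y)=0$ if all linear constraints are satisfied exactly and every nonlinear inequality constraint $g_i$ satisfies $g_i(y) \le \varepsilon$ and every nonlinear equality constraint $h_j$ satisfies $|h_j(y)| \le \varepsilon$. In the lower-level problem here, the only nonlinear constraints are $y_i^2 - y_{i+1} \le 0$, $i \in \{1,\dots,n-1\}$; all other constraints must hold exactly. *)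

(* Defs.v *)
From HB Require Import structures.
From mathcomp Require Import all_boot all_order all_algebra.
Set Implicit Arguments. Unset Strict Implicit. Unset Printing Implicit Defensive.
Import Order.TTheory GRing.Theory Num.Theory.
Local Open Scope ring_scope.

(* 1-based coordinate access of a vector y in R^(n+2): ycoord y i = y_i for 1 <= i <= n+2. *)
Definition ycoord (R : pzRingType) (n : nat) (y : 'rV[R]_(n.+2)) (i : nat) : R :=
  y ord0 (inord i.-1).

(* eps-feasibility for the lower-level problem:
   linear constraints exactly, nonlinear constraints y_i^2 - y_{i+1} <= 0 relaxed to <= eps. *)
Definition eps_feasible_LL (R : realFieldType) (n : nat) (x1 x2 eps : R)
    (y : 'rV[R]_(n.+2)) : Prop :=
  [/\ ycoord y 1 + ycoord y n = 2^-1,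
      (forall i : nat, (1 <= i <= n.-1)%N -> ycoord y i ^+ 2 - ycoord y i.+1 <= eps),
      (forall i : nat, (1 <= i <= n)%N -> 0 <= ycoord y i),
      0 <= ycoord y n.+1 <= x1 &
      - x2 <= ycoord y n.+2 <= x2].

(* Main.v *)
Require Import Defs.
From HB Require Import structures.
From mathcomp Require Import all_boot all_order all_algebra.
From mathcomp Require Import zify.
Import Order.TTheory GRing.Theory Num.Theory.
Local Open Scope ring_scope.

Definition yw (R : realFieldType) (n : nat) : 'rV[R]_(n.+2) :=
  \row_(j < n.+2) (if (j < n.-1)%N then (2^-1 : R) ^+ (2 ^ j) else 0).

Lemma yw_coord (R : realFieldType) (n i : nat) : (1 <= i <= n.+2)%N ->
  ycoord (yw R n) i = if (i.-1 < n.-1)%N then (2^-1 : R) ^+ (2 ^ i.-1) else 0.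
Proof.
move=> /andP[h1 h2]; rewrite /ycoord /yw mxE inordK //; lia.
Qed.

Theorem mainTheorem4 (R : realFieldType) (n : nat) (xl1 xu1 xl2 xu2 eps : R) :
  (2 <= n)%N ->
  1 <= xl1 -> xl1 < xu1 -> 1 <= xl2 -> xl2 < xu2 ->
  (2 : R) ^- (2 ^ n.-1)%N <= eps ->
  forall x1 x2 : R, xl1 <= x1 <= xu1 -> xl2 <= x2 <= xu2 ->
  exists y : 'rV[R]_(n.+2), eps_feasible_LL x1 x2 eps y /\ ycoord y n = 0.
Proof.
move=> hn h1 _ h2 _ he x1 x2 /andP[hx1 _] /andP[hx2 _].
have a0 : (0 : R) <= 2^-1 by rewrite invr_ge0.
have epos : 0 <= eps.
  by apply: le_trans he; rewrite invr_ge0 exprn_ge0.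
exists (yw R n); split; last first.
  rewrite yw_coord; last by lia.
  by have -> : (n.-1 < n.-1)%N = false by lia.
split.
- rewrite yw_coord ?yw_coord; try lia.
  have -> : (1.-1 < n.-1)%N = true by lia.
  have -> : (n.-1 < n.-1)%N = false by lia.
  by rewrite addr0 expr1.
- move=> i hi; rewrite yw_coord ?yw_coord; try lia.
  have -> : (i.-1 < n.-1)%N = true by lia.
  rewrite -exprM -expnSr.
  have -> : (i.-1.+1 = i.+1.-1)%N by lia.
  case: ifP => hc; first by rewrite subrr.
  rewrite subr0; have -> : (i.+1.-1 = n.-1)%N by lia.
  by rewrite exprVn.
- move=> i hi; rewrite yw_coord; last by lia.
  by case: ifP => // _; rewrite exprn_ge0.
- rewrite yw_coord; last by lia.
  have -> : (n.+1.-1 < n.-1)%N = false by lia.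
  rewrite lexx /=; apply: le_trans hx1; apply: le_trans h1; exact: ler01.
- rewrite yw_coord; last by lia.
  have -> : (n.+2.-1 < n.-1)%N = false by lia.
  have hx : 0 <= x2 by apply: le_trans hx2; apply: le_trans h2; exact: ler01.
  by rewrite hx oppr_le0 hx.
Qed.
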